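(* Let $G,H$ be connected graphs, $u_0\in V(G)$, $v_0\in V(H)$. If $\iota(G),\iota(H)<\infty$ then $\iota(G\circ_{u_0,v_0}H)=\iota(G)+\iota(H)$. If $\iota(G)=\infty$ or $\iota(H)=\infty$, then $\iota(G\circ_{u_0,v_0}H)=\infty$.
   Context: For a connected graph $G$ on vertices $v_1,\dots,v_n$, its distance matrix is $D=(d(v_i,v_j))_{i,j=1}^n$, where $d$ is the shortest-path distance; $\vec 1$ denotes the all-ones vector. $G$ is distance exceptional if $D\vec x=\vec 1$ has no solution. A curvature potential is a vector $\vec x$ with $D\vec x=\vec 1$. Curvature index $\iota(G)\in\mathbb{R}\cup\{\infty\}$: if $G$ is distance exceptional or has a curvature potential $\vec x$ with $\vec 1^\top\vec x\neq0$, then $\iota(G)$ is the unique real number with $\{D\vec x:\vec 1^\top\vec x=1\}\cap\mathbb{R}\vec 1=\{\iota(G)\vec 1\}$ (this intersection is a single point); otherwise (curvature potentials exist and all have $\vec 1^\top\vec x=0$) $\iota(G)=\infty$. The vertex coalescence $G\circ_{u_0,v_0}H$ is the graph obtained from the disjoint union of $G$ and $H$ by identifying $u_0$ with $v_0$. *)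

(* Defs.v *)
From HB Require Import structures.
From mathcomp Require Import all_boot all_order all_algebra.
Set Implicit Arguments. Unset Strict Implicit. Unset Printing Implicit Defensive.
Import Order.TTheory GRing.Theory Num.Theory.
Local Open Scope ring_scope.

Definition simple_graph (T : finType) (e : rel T) : Prop :=
  symmetric e /\ irreflexive e.

Definition connected_graph (T : finType) (e : rel T) : Prop :=
  forall x y : T, connect e x y.

Fixpoint reach (T : finType) (e : rel T) (n : nat) (x y : T) : bool :=
  match n with
  | 0 => x == y
  | n'.+1 => [exists z, e x z && reach e n' z y]
  end.

(* Shortest-path distance: least n (< #|T|) with a walk of length n.
   For a connected graph this is the usual distance. *)
Definition gdist (T : finType) (e : rel T) (x y : T) : nat :=
  find (fun n => reach e n x y) (iota 0 #|T|).

Definition Dmul (R : realFieldType) (T : finType) (e : rel T) (x : T -> R) : T -> R :=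
  fun v => \sum_(u : T) (gdist e v u)%:R * x u.

Definition curvature_potential (R : realFieldType) (T : finType) (e : rel T)
  (x : T -> R) : Prop := forall v, Dmul e x v = 1.

Definition distance_exceptional (R : realFieldType) (T : finType) (e : rel T) : Prop :=
  ~ exists x : T -> R, curvature_potential e x.

(* curvature_index e i : the curvature index of the graph is i,
   where None stands for infinity. *)
Definition curvature_index (R : realFieldType) (T : finType) (e : rel T)
  (i : option R) : Prop :=
  match i with
  | Some t =>
      (distance_exceptional R e \/
        exists x : T -> R, curvature_potential e x /\ \sum_(v : T) x v != 0)
      /\ (forall s : R,
            (exists x : T -> R, \sum_(v : T) x v = 1 /\ forall v, Dmul e x v = s)
            <-> s = t)
  | None =>
      (exists x : T -> R, curvature_potential e x)
      /\ forall x : T -> R, curvature_potential e x -> \sum_(v : T) x v = 0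
  end.

(* Vertex coalescence G o_{u0,v0} H: vertex set V(G) + (V(H) \ {v0}),
   where v0 is identified with u0. *)
Definition coal_vertex (T1 T2 : finType) (v0 : T2) : finType :=
  (T1 + {v : T2 | v != v0})%type.

Definition coal_rel (T1 T2 : finType) (e1 : rel T1) (e2 : rel T2) (u0 : T1) (v0 : T2)
  : rel (@coal_vertex T1 T2 v0) :=
  fun a b =>
    match a, b with
    | inl x, inl y => e1 x y
    | inr x, inr y => e2 (val x) (val y)
    | inl x, inr y => (x == u0) && e2 v0 (val y)
    | inr x, inl y => (y == u0) && e2 (val x) v0
    end.
Arguments coal_vertex : clear implicits.
Arguments coal_rel {T1 T2} e1 e2 u0 v0.

(* Main.v *)
Require Import Defs.
From HB Require Import structures.
From mathcomp Require Import all_boot all_order all_algebra.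
Import Order.TTheory GRing.Theory Num.Theory.
Local Open Scope ring_scope.
From mathcomp Require Import ring.
From Stdlib Require Import Classical.
Set Implicit Arguments. Unset Strict Implicit.
Local Open Scope nat_scope.

Lemma reach_cat (T : finType) (e : rel T) n m x y z :
  reach e n x y -> reach e m y z -> reach e (n + m) x z.
Proof.
elim: n x => [|n IH] x /=; first by move/eqP->.
case/existsP=> w /andP[exw rw] ry /=.
by apply/existsP; exists w; rewrite exw (IH _ rw ry).
Qed.

Lemma reach1 (T : finType) (e : rel T) x y : e x y -> reach e 1 x y.
Proof. by move=> h /=; apply/existsP; exists y; rewrite h eqxx. Qed.

Lemma reach_sym (T : finType) (e : rel T) : symmetric e ->
  forall n x y, reach e n x y -> reach e n y x.
Proof.
move=> se; elim=> [|n IH] x y /=; first by rewrite eq_sym.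
case/existsP=> z /andP[exz rz].
have := reach_cat (IH _ _ rz) (reach1 (_ : e z x)).
by rewrite addn1; apply; rewrite se.
Qed.

Lemma reach_path (T : finType) (e : rel T) n x y : reach e n x y ->
  exists p, [/\ size p = n, path e x p & last x p = y].
Proof.
elim: n x => [|n IH] x /=; first by move/eqP->; exists [::].
case/existsP=> z /andP[exz /IH [p [sp pp lp]]].
by exists (z :: p); rewrite /= exz sp pp lp.
Qed.

Lemma path_reach (T : finType) (e : rel T) x p :
  path e x p -> reach e (size p) x (last x p).
Proof.
elim: p x => [|z p IH] x /=; first by rewrite eqxx.
by case/andP=> exz pz; apply/existsP; exists z; rewrite exz IH.
Qed.

Lemma reach_short (T : finType) (e : rel T) n x y : reach e n x y ->
  exists2 m, (m < #|T|) & reach e m x y.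
Proof.
case/reach_path=> p [_ pp <-].
case: (shortenP pp) => p' pp' uq _.
exists (size p'); last exact: path_reach.
have := max_card (mem (x :: p')).
by rewrite (card_uniqP uq).
Qed.

Lemma gdist_le (T : finType) (e : rel T) n x y :
  reach e n x y -> (gdist e x y <= n).
Proof.
move=> r; rewrite /gdist; case: leqP => // lt.
have := before_find 0 lt.
have ltn : (n < #|T|).
  by apply: leq_trans lt _; have := find_size (fun n => reach e n x y) (iota 0 #|T|); rewrite size_iota.
by rewrite nth_iota // add0n r.
Qed.

Lemma gdist_reach (T : finType) (e : rel T) n x y :
  reach e n x y -> reach e (gdist e x y) x y.
Proof.
case/reach_short=> m lm r.
have hs : has (fun n => reach e n x y) (iota 0 #|T|).
  by apply/hasP; exists m; rewrite // mem_iota.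
have := nth_find 0 hs; rewrite nth_iota ?add0n //.
by rewrite -{2}(size_iota 0 #|T|) -has_find.
Qed.

Lemma gdist_sym (T : finType) (e : rel T) : symmetric e ->
  forall n x y, reach e n x y -> gdist e x y = gdist e y x.
Proof.
move=> se n x y r; have r' := reach_sym se r.
apply/anti_leq; rewrite !gdist_le //; apply: reach_sym => //.
  exact: (gdist_reach r).
exact: (gdist_reach r').
Qed.

Lemma gdist_ge (T : finType) (e : rel T) (f : T -> nat) y :
  f y = 0 -> (forall u v, e u v -> (f u <= f v + 1)) ->
  forall n x, reach e n x y -> (f x <= gdist e x y).
Proof.
move=> fy fe n x r; move: (gdist_reach r); move: (gdist e x y) => k.
elim: k x {r} => [|k IH] x /=; first by move/eqP->; rewrite fy.
case/existsP=> z /andP[exz rz]; apply: leq_trans (fe _ _ exz) _.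
by rewrite addn1 ltnS IH.
Qed.

Lemma reach_hom (T T' : finType) (e : rel T) (e' : rel T') (phi : T -> T') :
  (forall u v, e u v -> e' (phi u) (phi v)) ->
  forall n x y, reach e n x y -> reach e' n (phi x) (phi y).
Proof.
move=> he; elim=> [|n IH] x y /=; first by move/eqP->.
case/existsP=> z /andP[exz rz]; apply/existsP; exists (phi z).
by rewrite he // IH.
Qed.



Lemma connect_reach (T : finType) (e : rel T) x y :
  connect e x y -> exists n, reach e n x y.
Proof. by case/connectP=> p pp ->; exists (size p); apply: path_reach. Qed.

Lemma gdist_triangle (T : finType) (e : rel T) n m x y z :
  reach e n x y -> reach e m y z -> (gdist e x z <= gdist e x y + gdist e y z).
Proof.
by move=> r1 r2; apply: gdist_le; apply: reach_cat; apply: gdist_reach; eassumption.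
Qed.

Lemma gdist_xx (T : finType) (e : rel T) x : gdist e x x = 0.
Proof. by apply/eqP; rewrite -leqn0; apply: (@gdist_le _ _ 0); rewrite /= eqxx. Qed.
Local Open Scope ring_scope.
Definition allreach (T : finType) (e : rel T) := forall x y : T, exists n, reach e n x y.

Lemma Dmul_bilin (R : realFieldType) (T : finType) (e : rel T) (p q : T -> R) :
  symmetric e -> allreach e ->
  \sum_v p v * Dmul e q v = \sum_v q v * Dmul e p v.
Proof.
move=> se ar; rewrite /Dmul.
under eq_bigr do rewrite mulr_sumr.
rewrite exchange_big; apply: eq_bigr => u _; rewrite mulr_sumr.
apply: eq_bigr => v _.
have [n r] := ar v u; rewrite (gdist_sym se r). ring.
Qed.

Lemma Dmul_const (R : realFieldType) (T : finType) (e : rel T) (p q : T -> R) c :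
  (forall v, Dmul e q v = c) -> \sum_v p v * Dmul e q v = c * \sum_v p v.
Proof.
move=> h; rewrite mulr_sumr; apply: eq_bigr => v _; rewrite h; ring.
Qed.

Lemma pot_key (R : realFieldType) (T : finType) (e : rel T) (w x : T -> R) s :
  symmetric e -> allreach e -> curvature_potential e w ->
  \sum_v x v = 1 -> (forall v, Dmul e x v = s) -> s * \sum_v w v = 1.
Proof.
move=> se ar pw sx dx.
rewrite -(Dmul_const w dx) -Dmul_bilin // (Dmul_const x pw) mul1r //.
Qed.

Lemma Dmul_lin (R : realFieldType) (T : finType) (e : rel T) (f g : T -> R) a b v :
  Dmul e (fun u => a * f u + b * g u) v = a * Dmul e f v + b * Dmul e g v.
Proof.
rewrite /Dmul 2!mulr_sumr -big_split; apply: eq_bigr => u _ /=; ring.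
Qed.

Lemma ci_some (R : realFieldType) (T : finType) (e : rel T) (t : R) z0 :
  symmetric e -> allreach e ->
  \sum_v z0 v = 1 -> (forall v, Dmul e z0 v = t) -> curvature_index e (Some t).
Proof.
move=> se ar s0 d0; split.
  case: (classic (exists w : T -> R, curvature_potential e w)) => [[w pw]|nw].
    right; exists w; split => //; apply/eqP => h0.
    have := pot_key se ar pw s0 d0; rewrite h0 mulr0 => /eqP.
    by rewrite eq_sym oner_eq0.
  by left.
move=> s; split; last by move->; exists z0.
case=> x [sx dx].
case: (classic (exists w : T -> R, curvature_potential e w)) => [[w pw]|nw].
  have k1 := pot_key se ar pw sx dx; have k2 := pot_key se ar pw s0 d0.
  have nz : \sum_v w v != 0.
    by apply/eqP => h0; move: k2; rewrite h0 mulr0 => /eqP; rewrite eq_sym oner_eq0.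
  by apply: (mulIf nz); rewrite k1 k2.
case: (eqVneq s t) => // ne; exfalso; apply: nw.
exists (fun u => (s - t)^-1 * x u + (- (s - t)^-1) * z0 u) => v.
rewrite Dmul_lin dx d0 mulNr -mulrBr mulVf //.
by rewrite subr_eq0.
Qed.

Lemma ci_none (R : realFieldType) (T : finType) (e : rel T) (w : T -> R) :
  symmetric e -> allreach e ->
  curvature_potential e w -> \sum_v w v = 0 -> curvature_index e (@None R).
Proof.
move=> se ar pw sw; split; first by exists w.
move=> x px.
have := Dmul_bilin x w se ar.
by rewrite (Dmul_const x pw) (Dmul_const w px) !mul1r sw.
Qed.

Lemma Dmul_addsub (R : realFieldType) (T : finType) (e : rel T) (f g k : T -> R) v :
  Dmul e (fun u => f u + g u - k u) v = Dmul e f v + Dmul e g v - Dmul e k v.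
Proof.
rewrite /Dmul -big_split -sumrB; apply: eq_bigr => u _ /=; ring.
Qed.
Local Open Scope nat_scope.
Lemma step_le (T : finType) (e : rel T) u v t :
  (u = v \/ e u v) -> (exists n, reach e n v t) ->
  (gdist e u t <= gdist e v t + 1)%N.
Proof.
case=> [->|huv]; first by rewrite leq_addr.
case=> n r; apply: gdist_le; rewrite addnC; exact: reach_cat (reach1 huv) (gdist_reach r).
Qed.

Lemma connected_allreach (T : finType) (e : rel T) : connected_graph e -> allreach e.
Proof. by move=> c x y; case/connectP: (c x y) => p pp ->; exists (size p); apply: path_reach. Qed.

Section Coal.
Variables (T1 T2 : finType) (e1 : rel T1) (e2 : rel T2) (u0 : T1) (v0 : T2).
Hypotheses (s1 : symmetric e1) (s2 : symmetric e2) (i2 : irreflexive e2).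
Hypotheses (c1 : allreach e1) (c2 : allreach e2).

Local Notation K := (coal_vertex T1 T2 v0).
Local Notation eK := (coal_rel e1 e2 u0 v0).
Local Notation ST := {v : T2 | v != v0}.

Definition iH (h : T2) : K :=
  match (insub h : option ST) with Some h' => inr h' | None => inl u0 end.
Definition retG (a : K) : T1 := match a with inl x => x | inr _ => u0 end.
Definition retH (a : K) : T2 := match a with inl _ => v0 | inr h => val h end.

Lemma iH_cases h : (h = v0 /\ iH h = inl u0) \/ (exists2 hs : ST, val hs = h & iH h = inr hs).
Proof.
rewrite /iH; case: insubP => [hs hn vh|hn]; first by right; exists hs.
by left; split=> //; move/negPn/eqP: hn.
Qed.

Lemma iH_val (hs : ST) : iH (val hs) = inr hs.
Proof. by rewrite /iH valK. Qed.

Lemma iH_v0 : iH v0 = inl u0.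
Proof. by case: (iH_cases v0) => [[]//|[hs hv _]]; have := valP hs; rewrite hv eqxx. Qed.

Lemma retH_iH h : retH (iH h) = h.
Proof. by case: (iH_cases h) => [[-> ->]|[hs <- ->]]. Qed.

Lemma retG_iH h : retG (iH h) = u0.
Proof. by case: (iH_cases h) => [[-> ->]|[hs <- ->]]. Qed.

Lemma K_cover (P : K -> Prop) :
  (forall x, P (inl x)) -> (forall h, P (iH h)) -> forall a, P a.
Proof. by move=> hl hr [x|hs]; [apply: hl | rewrite -iH_val; apply: hr]. Qed.

Lemma eK_sym : symmetric eK.
Proof.
move=> [x|h] [y|k]; rewrite /coal_rel //.
- by rewrite s2.
- by rewrite s2.
Qed.

Lemma inl_hom x y : e1 x y -> eK (inl x) (inl y).
Proof. by []. Qed.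

Lemma iH_hom h k : e2 h k -> eK (iH h) (iH k).
Proof.
case: (iH_cases h) => [[-> ->]|[hs <- ->]]; case: (iH_cases k) => [[-> ->]|[ks <- ->]].
- by rewrite i2.
- by rewrite /coal_rel eqxx.
- by rewrite /coal_rel eqxx.
- by [].
Qed.

Lemma eK_ret a b : eK a b ->
  (retG a = retG b /\ (retH a = retH b \/ e2 (retH a) (retH b))) \/
  (retH a = retH b /\ (retG a = retG b \/ e1 (retG a) (retG b))).
Proof.
case: a => [x|h]; case: b => [y|k] /=; rewrite /coal_rel.
- by move=> h; right; split=> //; right.
- by case/andP=> /eqP -> h; left; split=> //; right.
- by case/andP=> /eqP -> hh; left; split=> //; right.
- by move=> hh; left; split=> //; right.
Qed.

Lemma reachGH x h : reach eK (gdist e1 x u0 + gdist e2 v0 h) (inl x) (iH h).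
Proof.
apply: reach_cat.
  apply: (reach_hom inl_hom); have [n r] := c1 x u0; exact: gdist_reach r.
rewrite -iH_v0; apply: (reach_hom iH_hom); have [n r] := c2 v0 h; exact: gdist_reach r.
Qed.

Lemma allreachK : allreach eK.
Proof.
apply: K_cover => [x|h]; apply: K_cover => [y|k].
- have [n r] := c1 x y; exists n; exact: (reach_hom inl_hom).
- by eexists; apply: reachGH.
- by eexists; apply: reach_sym; [exact: eK_sym | apply: reachGH].
- have [n r] := c2 h k; exists n; exact: (reach_hom iH_hom).
Qed.

Lemma dK_GG x y : gdist eK (inl x) (inl y) = gdist e1 x y.
Proof.
have [n r] := c1 x y; have r' := reach_hom inl_hom (gdist_reach r).
apply/anti_leq; rewrite gdist_le //=.
have := @gdist_ge _ eK (fun a => gdist e1 (retG a) y) (inl y) (gdist_xx _ _) _ _ _ r'.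
apply => a b /eK_ret [[-> _]|[_ hb]]; first by rewrite leq_addr.
by apply: step_le.
Qed.

Lemma dK_HH h k : gdist eK (iH h) (iH k) = gdist e2 h k.
Proof.
have [n r] := c2 h k; have r' := reach_hom iH_hom (gdist_reach r).
apply/anti_leq; rewrite gdist_le //=.
suff: (gdist e2 (retH (iH h)) k <= gdist eK (iH h) (iH k))%N by rewrite retH_iH.
apply: (@gdist_ge _ eK (fun a => gdist e2 (retH a) k) (iH k) _ _ _ _ r').
  by rewrite /= retH_iH gdist_xx.
move=> a b /eK_ret [[_ hb]|[-> _]]; last by rewrite leq_addr.
by apply: step_le.
Qed.

Lemma dK_GH x h : gdist eK (inl x) (iH h) = (gdist e1 x u0 + gdist e2 v0 h)%N.
Proof.
apply/anti_leq; rewrite gdist_le ?reachGH //=.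
rewrite addnC.
apply: (@gdist_ge _ eK (fun a => gdist e2 (retH a) h + gdist e1 (retG a) u0)%N (iH h) _ _ _ _ (reachGH x h)).
  by rewrite /= retH_iH retG_iH !gdist_xx.
move=> a b /eK_ret [[-> hb]|[-> hb]].
  by rewrite addnAC leq_add2r; apply: step_le.
by rewrite -addnA leq_add2l; apply: step_le.
Qed.

Lemma dK_HG h x : gdist eK (iH h) (inl x) = (gdist e2 h v0 + gdist e1 u0 x)%N.
Proof.
rewrite -(gdist_sym eK_sym (reachGH x h)) dK_GH addnC.
have [n r] := c1 x u0; have [m r'] := c2 v0 h.
by rewrite (gdist_sym s1 r) (gdist_sym s2 r').
Qed.

Local Open Scope ring_scope.
Variable R : realFieldType.

Definition extG (x : T1 -> R) (a : K) : R := match a with inl y => x y | inr _ => 0 end.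
Definition extH (y : T2 -> R) (a : K) : R :=
  match a with inl x => if x == u0 then y v0 else 0 | inr hs => y (val hs) end.
Definition deltaK (a : K) : R := match a with inl x => if x == u0 then 1 else 0 | inr _ => 0 end.

Lemma sumK (F : K -> R) : \sum_a F a = \sum_x F (inl x) + \sum_(hs : ST) F (inr hs).
Proof. by rewrite big_sumType. Qed.

Lemma sumH (G : T2 -> R) : \sum_h G h = G v0 + \sum_(hs : ST) G (val hs).
Proof.
rewrite (bigD1 v0) //=; congr (_ + _).
rewrite (reindex_omap (val : ST -> T2) insub); last by move=> i hi; rewrite insubT.
by apply: eq_bigl => j; rewrite valK eqxx andbT (valP j).
Qed.

Lemma sum_extG x (F : K -> R) : \sum_a F a * extG x a = \sum_y F (inl y) * x y.
Proof. by rewrite sumK [X in _ + X]big1 ?addr0 // => hs _; rewrite mulr0. Qed.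

Lemma sum_extH y (F : K -> R) : \sum_a F a * extH y a = \sum_h F (iH h) * y h.
Proof.
rewrite sumK sumH iH_v0; congr (_ + _).
  rewrite (bigD1 u0) //= eqxx big1 ?addr0 // => x /negbTE ->; rewrite mulr0.
  by [].
by apply: eq_bigr => hs _; rewrite iH_val.
Qed.

Lemma sum_delta (F : K -> R) : \sum_a F a * deltaK a = F (inl u0).
Proof.
rewrite sumK [X in _ + X]big1 ?addr0; last by move=> hs _; rewrite mulr0.
rewrite (bigD1 u0) //= eqxx mulr1 big1 ?addr0 // => x /negbTE ->; rewrite mulr0.
by [].
Qed.

Lemma D_extG_G x x0 : Dmul eK (extG x) (inl x0) = Dmul e1 x x0.
Proof. by rewrite /Dmul sum_extG; apply: eq_bigr => y _; rewrite dK_GG. Qed.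

Lemma D_extG_H x h :
  Dmul eK (extG x) (iH h) = (gdist e2 h v0)%:R * \sum_y x y + Dmul e1 x u0.
Proof.
rewrite /Dmul sum_extG mulr_sumr -big_split; apply: eq_bigr => y _ /=.
by rewrite dK_HG natrD mulrDl.
Qed.

Lemma D_extH_G y x0 :
  Dmul eK (extH y) (inl x0) = (gdist e1 x0 u0)%:R * \sum_h y h + Dmul e2 y v0.
Proof.
rewrite /Dmul sum_extH mulr_sumr -big_split; apply: eq_bigr => h _ /=.
by rewrite dK_GH natrD mulrDl.
Qed.

Lemma D_extH_H y h : Dmul eK (extH y) (iH h) = Dmul e2 y h.
Proof. by rewrite /Dmul sum_extH; apply: eq_bigr => k _; rewrite dK_HH. Qed.

Lemma D_delta_G x0 : Dmul eK deltaK (inl x0) = (gdist e1 x0 u0)%:R.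
Proof. by rewrite /Dmul sum_delta dK_GG. Qed.

Lemma D_delta_H h : Dmul eK deltaK (iH h) = (gdist e2 h v0)%:R.
Proof. by rewrite /Dmul sum_delta dK_HG gdist_xx addn0. Qed.

Lemma sum1_ext (F : K -> R) : \sum_a F a = \sum_a 1 * F a.
Proof. by apply: eq_bigr => a _; rewrite mul1r. Qed.

Lemma tot_extG x : \sum_a extG x a = \sum_y x y.
Proof. by rewrite sum1_ext sum_extG; apply: eq_bigr => y _; rewrite mul1r. Qed.
Lemma tot_extH y : \sum_a extH y a = \sum_h y h.
Proof. by rewrite sum1_ext sum_extH; apply: eq_bigr => h _; rewrite mul1r. Qed.
Lemma tot_delta : \sum_a deltaK a = 1.
Proof. by rewrite sum1_ext sum_delta. Qed.

Lemma part_some (a b : R) : curvature_index e1 (Some a) -> curvature_index e2 (Some b) ->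
  curvature_index eK (Some (a + b)).
Proof.
move=> [_ ha] [_ hb].
have [x [sx dx]] := (ha a).2 erefl.
have [y [sy dy]] := (hb b).2 erefl.
apply: (@ci_some R K eK (a + b) (fun v => extG x v + extH y v - deltaK v)).
- exact: eK_sym.
- exact: allreachK.
- by rewrite sumrB big_split /= tot_extG tot_extH tot_delta sx sy addrK.
- apply: K_cover => [x0|h]; rewrite Dmul_addsub.
    by rewrite D_extG_G D_extH_G D_delta_G dx dy sy mulr1; ring.
  by rewrite D_extG_H D_extH_H D_delta_H dx dy sx mulr1; ring.
Qed.

Lemma part_none : curvature_index e1 (@None R) \/ curvature_index e2 (@None R) ->
  curvature_index eK (@None R).
Proof.
case=> [[[w pw] hw]|[[w pw] hw]]; have sw := hw w pw.
  apply: (@ci_none R K eK (extG w)); [exact: eK_sym | exact: allreachK | | by rewrite tot_extG].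
  apply: K_cover => [x0|h]; first by rewrite D_extG_G pw.
  by rewrite D_extG_H sw mulr0 add0r pw.
apply: (@ci_none R K eK (extH w)); [exact: eK_sym | exact: allreachK | | by rewrite tot_extH].
apply: K_cover => [x0|h]; last by rewrite D_extH_H pw.
by rewrite D_extH_G sw mulr0 add0r pw.
Qed.

End Coal.
Local Open Scope ring_scope.
Unset Implicit Arguments.

Theorem theorem3p5 (R : realFieldType) (T1 T2 : finType)
  (e1 : rel T1) (e2 : rel T2) (u0 : T1) (v0 : T2) :
  simple_graph e1 -> simple_graph e2 ->
  connected_graph e1 -> connected_graph e2 ->
  (forall a b : R, curvature_index e1 (Some a) -> curvature_index e2 (Some b) ->
     curvature_index (coal_rel e1 e2 u0 v0) (Some (a + b)))
  /\ (curvature_index e1 (@None R) \/ curvature_index e2 (@None R) ->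
     curvature_index (coal_rel e1 e2 u0 v0) (@None R)).
Proof.
move=> [s1 ir1] [s2 ir2] c1 c2.
have a1 := connected_allreach c1; have a2 := connected_allreach c2.
split.
  move=> a b.
  exact: (@part_some T1 T2 e1 e2 u0 v0 s1 s2 ir2 a1 a2 R a b).
exact: (@part_none T1 T2 e1 e2 u0 v0 s1 s2 ir2 a1 a2 R).
Qed.
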